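(* In each of the categories $\mathsf{Haus}$ (Hausdorff spaces), $\mathsf{Top}_1$ (T$_1$-spaces) and $\mathsf{Top}_0$ (T$_0$-spaces), a space is finitely generated with respect to open embeddings if, and only if, it is compact.
   Context: An open embedding is an injective continuous open map. For a class $\mathcal{M}$ of monomorphisms of a category $\mathcal{C}$ (here: morphisms of the category that are open embeddings), an object $X$ is finitely generated w.r.t. $\mathcal{M}$ if for every directed diagram $(Z_i)_{i\in I}$ (indexed by a directed poset, i.e. every finite subset has an upper bound) with connecting morphisms $z_{i,j}$ in $\mathcal{M}$ and colimit cocone $c_i:Z_i\to Z$ in $\mathcal{C}$, every morphism $f:X\to Z$ factorizes as $f=c_i\cdot g$ for some $i$ and $g:X\to Z_i$, and if also $f=c_i\cdot g'$ then $z_{i,j}\cdot g=z_{i,j}\cdot g'$ for some connecting morphism $z_{i,j}$. *)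

(* Defs.v *)
From HB Require Import structures.
From mathcomp Require Import all_boot all_order.
From mathcomp Require Import all_classical topology.
Set Implicit Arguments. Unset Strict Implicit. Unset Printing Implicit Defensive.
Local Open Scope classical_set_scope.

(* The three full subcategories of Top considered in the paper;
   morphisms are continuous maps.  Objects are given by a predicate. *)
Definition Haus (T : topologicalType) : Prop := @hausdorff_space T.
Definition Top1 (T : topologicalType) : Prop := @accessible_space T.
Definition Top0 (T : topologicalType) : Prop := @kolmogorov_space T.

Definition open_embedding (X Y : topologicalType) (f : X -> Y) : Prop :=
  [/\ injective f, continuous f & forall U : set X, open U -> open (f @` U)].

Definition directed_poset (I : Type) (le : I -> I -> Prop) : Prop :=
  [/\ (forall i, le i i),
      (forall i j k, le i j -> le j k -> le i k),
      (forall i j, le i j -> le j i -> i = j) &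
      (forall A : set I, finite_set A -> exists j, forall i, A i -> le i j)].

Definition oe_diagram (P : topologicalType -> Prop) (I : Type)
  (le : I -> I -> Prop) (Z : I -> topologicalType)
  (z : forall i j, le i j -> Z i -> Z j) : Prop :=
  [/\ directed_poset le,
      (forall i, P (Z i)),
      (forall i j (h : le i j), open_embedding (z i j h)),
      (forall i (h : le i i), z i i h =1 id) &
      (forall i j k (hij : le i j) (hjk : le j k) (hik : le i k),
          z i k hik =1 z j k hjk \o z i j hij)].

Definition is_cocone (I : Type) (le : I -> I -> Prop) (Z : I -> topologicalType)
  (z : forall i j, le i j -> Z i -> Z j) (W : topologicalType)
  (d : forall i, Z i -> W) : Prop :=
  (forall i, continuous (d i)) /\
  (forall i j (h : le i j), d j \o z i j h = d i).

Definition is_colimit (P : topologicalType -> Prop) (I : Type)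
  (le : I -> I -> Prop) (Z : I -> topologicalType)
  (z : forall i j, le i j -> Z i -> Z j) (Zc : topologicalType)
  (c : forall i, Z i -> Zc) : Prop :=
  [/\ P Zc, is_cocone z c &
      forall (W : topologicalType), P W -> forall d : forall i, Z i -> W,
        is_cocone z d ->
        exists u : Zc -> W, (continuous u /\ forall i, u \o c i = d i) /\
          (forall u' : Zc -> W, continuous u' -> (forall i, u' \o c i = d i) ->
             u' = u)].

Definition fin_gen_oe (P : topologicalType -> Prop) (X : topologicalType) : Prop :=
  forall (I : Type) (le : I -> I -> Prop) (Z : I -> topologicalType)
         (z : forall i j, le i j -> Z i -> Z j)
         (Zc : topologicalType) (c : forall i, Z i -> Zc),
    oe_diagram P z -> is_colimit P z c ->
    forall f : X -> Zc, continuous f ->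
      (exists i (g : X -> Z i), continuous g /\ f = c i \o g) /\
      (forall i (g g' : X -> Z i), continuous g -> continuous g' ->
         f = c i \o g -> f = c i \o g' ->
         exists j (h : le i j), z i j h \o g = z i j h \o g').

(* Main.v *)
Require Import Defs.
From HB Require Import structures.
From mathcomp Require Import all_boot all_order.
From mathcomp Require Import all_classical topology.
Local Open Scope classical_set_scope.

Lemma kolmo_open (T : topologicalType) : @kolmogorov_space T <->
  forall x y : T, x != y -> exists U : set T, open U /\ ((U x /\ ~ U y) \/ (U y /\ ~ U x)).
Proof.
split=> H x y /H [A HA].
  case: HA => -[]; rewrite !inE => /[dup] Ax; rewrite nbhsE => -[U [oU Ux] UA] nA;
   exists U; split=> //; [left|right]; split=> // /UA; rewrite /setC in nA; exact: nA.
case: HA => oA [[Ax nAy]|[Ay nAx]]; exists A; [left|right]; rewrite !inE; split=> //;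
  exact: open_nbhs_nbhs.
Qed.

Lemma acc_open (T : topologicalType) : @accessible_space T <->
  forall x y : T, x != y -> exists U : set T, open U /\ U x /\ ~ U y.
Proof.
split=> H x y /H [A HA]; exists A.
  by case: HA; rewrite !inE.
by case: HA => oA [Ax nAy]; rewrite !inE.
Qed.

Lemma haus_open (T : topologicalType) : @hausdorff_space T <->
  forall x y : T, x != y -> exists U V : set T, [/\ open U, open V, U x, V y & U `&` V = set0].
Proof.
rewrite open_hausdorff; split=> H x y /H.
  move=> [[U V]] /= [xU yV] [oU oV /eqP UV]; exists U, V; split=> //; by rewrite -inE.
by move=> [U [V [oU oV xU yV UV]]]; exists (U, V); rewrite /= ?inE; split => //; apply/eqP.
Qed.


Definition pullP (P : topologicalType -> Prop) := forall (A B : topologicalType) (f : A -> B),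
  injective f -> continuous f -> P B -> P A.
Definition pushP (P : topologicalType -> Prop) := forall (L : topologicalType) (K : Type)
  (Zk : K -> topologicalType) (l : forall k, Zk k -> L), (forall k, P (Zk k)) ->
  (forall k, injective (l k)) -> (forall k U, open U -> open (l k @` U)) ->
  (forall a b : L, exists k x y, a = l k x /\ b = l k y) -> P L.

Lemma neq_inj {A B : eqType} {f : A -> B} {x y} : injective f -> x != y -> f x != f y.
Proof. by move=> fi /eqP nxy; apply/eqP => /fi. Qed.

Lemma neq_eq (A : eqType) (x y : A) : x != y -> x <> y.
Proof. by move/eqP. Qed.

Lemma pull_Haus : pullP Haus.
Proof.
move=> A B f fi fc; rewrite /Haus !haus_open => H x y /(neq_inj fi) /H [U [V [oU oV Ux Vy UV]]].
exists (f @^-1` U), (f @^-1` V); split => //; try by move/continuousP: fc; apply.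
by rewrite -preimage_setI UV preimage_set0.
Qed.

Lemma pull_Top1 : pullP Top1.
Proof.
move=> A B f fi fc; rewrite /Top1 !acc_open => H x y /(neq_inj fi) /H [U [oU [Ux Uy]]].
exists (f @^-1` U); split => //; by move/continuousP: fc; apply.
Qed.

Lemma pull_Top0 : pullP Top0.
Proof.
move=> A B f fi fc; rewrite /Top0 !kolmo_open => H x y /(neq_inj fi) /H [U [oU HU]].
exists (f @^-1` U); split => //; by move/continuousP: fc; apply.
Qed.

Lemma push_Haus : pushP Haus.
Proof.
move=> L K Zk l HP li lo cov; rewrite /Haus haus_open => a b nab.
have [k [x [y [ea eb]]]] := cov a b; subst a b.
have nxy : x != y by apply/eqP => exy; subst y; rewrite eqxx in nab.
have := HP k; rewrite /Haus haus_open => /(_ x y nxy) [U [V [oU oV Ux Vy UV]]].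
exists (l k @` U), (l k @` V); split; try exact: lo; try by exists x. by exists y.
apply/seteqP; split => // p [[u Uu <-] [v Vv]] /li vu; subst v.
by have : (U `&` V) u by []; rewrite UV.
Qed.

Lemma push_Top1 : pushP Top1.
Proof.
move=> L K Zk l HP li lo cov; rewrite /Top1 acc_open => a b nab.
have [k [x [y [ea eb]]]] := cov a b; subst a b.
have nxy : x != y by apply/eqP => exy; subst y; rewrite eqxx in nab.
have := HP k; rewrite /Top1 acc_open => /(_ x y nxy) [U [oU [Ux Uy]]].
exists (l k @` U); split; first exact: lo.
by split; [exists x | move=> [u Uu /li eu]; apply: Uy; rewrite -eu].
Qed.

Lemma push_Top0 : pushP Top0.
Proof.
move=> L K Zk l HP li lo cov; rewrite /Top0 kolmo_open => a b nab.
have [k [x [y [ea eb]]]] := cov a b; subst a b.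
have nxy : x != y by apply/eqP => exy; subst y; rewrite eqxx in nab.
have := HP k; rewrite /Top0 kolmo_open => /(_ x y nxy) [U [oU HU]].
exists (l k @` U); split; first exact: lo.
case: HU => -[H1 H2]; [left|right]; (split; [exact: imageP| move=> [u Uu /li eu]; apply: H2; by rewrite -eu]).
Qed.


From mathcomp Require Import finmap.

Definition pt {X : topologicalType} (x : X) : Type := X.
HB.instance Definition _ (X : topologicalType) (x : X) := Topological.copy (pt x) X.
HB.instance Definition _ (X : topologicalType) (x : X) := isPointed.Build (pt x) x.

Lemma compact_coverT (X : topologicalType) : compact [set: X] <-> cover_compact [set: X].
Proof.
case: (pselect (exists x : X, True)) => [[x _]|nX].
  change (compact [set: pt x] <-> cover_compact [set: pt x]).
  by rewrite compact_cover.
have e : [set: X] = set0 by apply/seteqP; split => // y; case: nX; exists y.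
rewrite e; split => _; first by move=> I D f _ _; exists fset0 => //.
exact: compact0.
Qed.


Section Colim.
Variables (I : Type) (le : I -> I -> Prop) (Z : I -> topologicalType)
  (z : forall i j, le i j -> Z i -> Z j).
Hypothesis dp : directed_poset le.
Hypothesis zinj : forall i j (h : le i j), injective (z i j h).
Hypothesis zcont : forall i j (h : le i j), continuous (z i j h).
Hypothesis zopen : forall i j (h : le i j) U, open U -> open (z i j h @` U).
Hypothesis zid : forall i (h : le i i), z i i h =1 id.
Hypothesis zcomp : forall i j k (hij : le i j) (hjk : le j k) (hik : le i k),
          z i k hik =1 z j k hjk \o z i j hij.

Lemma le_refl i : le i i. Proof. by case: dp. Qed.

Lemma le_trans a b c : le a b -> le b c -> le a c.
Proof. by case: dp => _ t _ _; exact: t. Qed.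

Lemma ub2 i j : exists k, le i k /\ le j k.
Proof.
case: dp => _ _ _ /(_ [set i; j] (finite_set2 _ _)) [k Hk].
by exists k; split; apply: Hk; [left|right].
Qed.

Lemma zcomp_any i j k (hij : le i j) (hjk : le j k) x : z j k hjk (z i j hij x) = z i k (le_trans _ _ _ hij hjk) x.
Proof. by rewrite (zcomp _ _ _ hij hjk). Qed.

Lemma z_pi i j (h h' : le i j) : z i j h = z i j h'.
Proof. by rewrite (Prop_irrelevance h h'). Qed.

Definition Tot := {i : I & Z i}.
Definition R (p q : Tot) : Prop := exists k (hi : le (projT1 p) k) (hj : le (projT1 q) k),
  z _ _ hi (projT2 p) = z _ _ hj (projT2 q).

Lemma R_refl p : R p p.
Proof. by exists (projT1 p), (le_refl _), (le_refl _). Qed.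

Lemma R_sym p q : R p q -> R q p.
Proof. by move=> [k [hi [hj e]]]; exists k, hj, hi. Qed.

Lemma R_trans p q r : R p q -> R q r -> R p r.
Proof.
move=> [k1 [h1 [h2 e1]]] [k2 [h3 [h4 e2]]].
have [m [hm1 hm2]] := ub2 k1 k2.
exists m, (le_trans _ _ _ h1 hm1), (le_trans _ _ _ h4 hm2).
rewrite (zcomp _ _ _ h1 hm1) (zcomp _ _ _ h4 hm2) /= e1 -e2.
by rewrite !zcomp_any (z_pi _ _ (le_trans _ _ _ h2 hm1) (le_trans _ _ _ h3 hm2)).
Qed.

Definition Lcar := {S : set Tot | exists p, S = R p}.
HB.instance Definition _ := gen_eqMixin Lcar.
HB.instance Definition _ := gen_choiceMixin Lcar.

Definition l i (x : Z i) : Lcar := exist _ (R (existT _ i x)) (ex_intro _ _ erefl).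

Definition lop (U : set Lcar) := forall i, open (l i @^-1` U).

Lemma lopT : lop setT. Proof. by move=> i; rewrite preimage_setT; exact: openT. Qed.
Lemma lopI : setI_closed lop.
Proof. by move=> A B oA oB i; rewrite preimage_setI; apply: openI. Qed.
Lemma lop_bigU (J : Type) (f : J -> set Lcar) : (forall j, lop (f j)) -> lop (\bigcup_j f j).
Proof. by move=> H i; rewrite preimage_bigcup; apply: bigcup_open => j _; exact: H. Qed.

HB.instance Definition _ := isOpenTopological.Build Lcar lopT lopI lop_bigU.

Lemma l_cont i : continuous (l i).
Proof. by apply/continuousP => A oA; exact: oA. Qed.

Lemma lE i j x y : l i x = l j y <-> R (existT _ i x) (existT _ j y).
Proof.
split.
  move=> /(congr1 (@proj1_sig _ _)) /= e.
  by rewrite e; exact: R_refl.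
move=> Hr; apply: eq_exist; apply/seteqP; split => r Hr'.
  exact: R_trans _ _ _ (R_sym _ _ Hr) Hr'.
exact: R_trans _ _ _ Hr Hr'.
Qed.

Lemma l_inj i : injective (l i).
Proof.
move=> x y /lE [k [hi [hj /=]]]; rewrite (z_pi _ _ hi hj); exact: zinj.
Qed.

Lemma l_z i j (h : le i j) x : l j (z i j h x) = l i x.
Proof.
apply/lE; exists j, (le_refl j), h => /=; exact: zid.
Qed.

Lemma l_cov (S : Lcar) : exists i x, S = l i x.
Proof.
case: S => s [[i x] e]; exists i, x; exact: eq_exist.
Qed.

Lemma l_open' i (U : set (Z i)) : open U -> lop (l i @` U).
Proof.
move=> oU j; rewrite openE => y [x Ux /lE [k [hi [hj /= e]]]].
have oW : open (z j k hj @^-1` (z i k hi @` U)).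
  by move/continuousP: (zcont j k hj); apply; exact: zopen.
apply: (@filterS _ _ _ (z j k hj @^-1` (z i k hi @` U))).
  move=> y' [x' Ux' e']; exists x' => //; apply/lE; exists k, hi, hj => /=; exact: e'.
by apply: open_nbhs_nbhs; split => //; exists x.
Qed.

Lemma l_open i (U : set (Z i)) : open U -> open (l i @` U).
Proof. exact: l_open'. Qed.

Lemma l_cocone : is_cocone z l.
Proof.
split; first exact: l_cont.
by move=> i j h; apply: funext => x /=; exact: l_z.
Qed.

Variable P : topologicalType -> Prop.
Hypothesis PZ : forall i, P (Z i).
Hypothesis HP : forall (L : topologicalType) (K : Type)
  (Zk : K -> topologicalType) (l : forall k, Zk k -> L), (forall k, P (Zk k)) ->
  (forall k, injective (l k)) -> (forall k U, open U -> open (l k @` U)) ->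
  (forall a b : L, exists k x y, a = l k x /\ b = l k y) -> P L.

Lemma L_P : P Lcar.
Proof.
apply: (HP _ _ _ _ PZ l_inj l_open) => a b.
have [i [x ->]] := l_cov a; have [j [y ->]] := l_cov b.
have [k [hi hj]] := ub2 i j.
by exists k, (z _ _ hi x), (z _ _ hj y); rewrite !l_z.
Qed.

Lemma colim_props (Zc : topologicalType) (c : forall i, Z i -> Zc) :
  is_colimit P z c -> [/\ (forall i, injective (c i)),
    (forall i U, open U -> open (c i @` U)) & (forall y, exists i x, y = c i x)].
Proof.
case => PZc [cc ccomp] univ.
have [u [[uc uE] _]] := univ Lcar L_P l l_cocone.
have uE' i x : u (c i x) = l i x by rewrite -(uE i).
have c_R p q : R p q -> c (projT1 p) (projT2 p) = c (projT1 q) (projT2 q).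
  move=> [k [hi [hj e]]].
  by rewrite -(ccomp _ _ hi) -(ccomp _ _ hj) /= e.
pose v (S : Lcar) := let p := proj1_sig (cid (proj2_sig S)) in c (projT1 p) (projT2 p).
have vl i x : v (l i x) = c i x.
  rewrite /v; case: (cid _) => p /= e.
  have : R (existT _ i x) p by rewrite e; exact: R_refl.
  by move/c_R.
have vc : continuous v.
  apply/continuousP => A oA; suff : lop (v @^-1` A) by []; move=> i.
  have -> : l i @^-1` (v @^-1` A) = c i @^-1` A.
    by apply/seteqP; split => x /=; rewrite vl.
  by move/continuousP: (cc i); apply.
have vu : v \o u = id.
  have [u0 [_ uniq]] := univ Zc PZc c (conj cc ccomp).
  rewrite (uniq (v \o u)); last 2 first.
  - by move=> x; apply: continuous_comp; [exact: uc | exact: vc].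
  - by move=> i; apply: funext => x /=; rewrite uE' vl.
  by rewrite (uniq id) // => x.
have vuy y : v (u y) = y by rewrite -[in RHS](congr1 (fun f => f y) vu).
split.
- by move=> i x y e; apply: (@l_inj i); rewrite -!uE' e.
- move=> i U oU.
  have -> : c i @` U = u @^-1` (l i @` U).
    apply/seteqP; split => y.
      by move=> [x Ux <-]; exists x => //; rewrite uE'.
    by move=> [x Ux e]; exists x => //; rewrite -vl e vuy.
  by move/continuousP: uc; apply; exact: l_open.
- move=> y; have [i [x e]] := l_cov (u y).
  by exists i, x; rewrite -vl -e vuy.
Qed.

End Colim.


Lemma compact_fg (P : topologicalType -> Prop)
  (HP : forall (L : topologicalType) (K : Type)
   (Zk : K -> topologicalType) (l : forall k, Zk k -> L), (forall k, P (Zk k)) ->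
   (forall k, injective (l k)) -> (forall k U, open U -> open (l k @` U)) ->
   (forall a b : L, exists k x y, a = l k x /\ b = l k y) -> P L)
  (X : topologicalType) : compact [set: X] -> fin_gen_oe P X.
Proof.
move=> cX I le Z z Zc c [dp PZ Hoe Hid Hcomp] Hcol f fc.
have zinj i j h : injective (z i j h) by case: (Hoe i j h).
have zcont i j h : continuous (z i j h) by case: (Hoe i j h).
have zopen i j h : forall U, open U -> open (z i j h @` U) by case: (Hoe i j h).
have [ci co ccov] := colim_props _ _ _ _ dp zinj zcont zopen Hid Hcomp _ PZ HP _ _ Hcol.
have [_ [_ ccomp] _] := Hcol.
have lerefl : forall i, le i i by case: dp.
split; last first.
  move=> i g g' _ _ e1 e2; exists i, (lerefl i).
  have -> // : g = g'.
  apply: funext => x; apply: (ci i).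
  by rewrite -[c i (g x)]/((c i \o g) x) -[c i (g' x)]/((c i \o g') x) -e1 -e2.
pose ix (x : X) := projT1 (cid (ccov (f x))).
pose fam (x : X) := f @^-1` (c (ix x) @` setT).
have famo x : open (fam x).
  by move/continuousP: fc; apply; apply: co; exact: openT.
have famc : [set: X] `<=` cover setT fam.
  move=> x _; exists x => //; rewrite /fam /ix /=.
  case: (cid _) => i /= [y e]; by exists y.
have cX' : cover_compact [set: X] by apply/compact_coverT.
have [D' _ HD'] := cX' X setT fam (fun x _ => famo x) famc.
have [k Hk] : exists k, forall i, (ix @` [set` D']) i -> le i k.
  case: dp => _ _ _; apply; apply: finite_image; exact: finite_fset.
have H y : exists w, f y = c k w.
  have [x Dx [w _ e]] := HD' y Logic.I.
  have hk : le (ix x) k by apply: Hk; exists x.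
  exists (z _ _ hk w); rewrite -e.
  by rewrite -[c k (z _ _ hk w)]/((c k \o z _ _ hk) w) ccomp.
pose g y := proj1_sig (cid (H y)).
have gE y : f y = c k (g y) by rewrite /g; case: (cid _).
exists k, g; split; last by apply: funext => y; rewrite gE.
apply/continuousP => V oV.
have -> : g @^-1` V = f @^-1` (c k @` V).
  apply/seteqP; split => y /=.
    by move=> Vg; exists (g y) => //; rewrite gE.
  by move=> [w Vw]; rewrite gE => /ci <-.
by move/continuousP: fc; apply; exact: co.
Qed.


Section Sub.
Variable X : topologicalType.

Lemma sub_open (A : set X) (U : set (set_type A)) : open U ->
  exists W, open W /\ U = set_val @^-1` W.
Proof. by move=> [W oW <-]; exists W. Qed.

Lemma val_open (A : set X) (U : set (set_type A)) : open A -> open U -> open (set_val @` U).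
Proof.
move=> oA /sub_open [W [oW ->]].
have -> : (set_val : set_type A -> X) @` ((set_val : set_type A -> X) @^-1` W) = W `&` A.
  apply/seteqP; split => x.
    by move=> [p Wp <-]; split => //; exact: set_mem (valP p).
  by move=> [Wx Ax]; exists (SigSub (mem_set Ax)).
exact: openI.
Qed.

Lemma val_cont (A : set X) : continuous (set_val : set_type A -> X).
Proof. exact: initial_continuous. Qed.

Definition sincl {A B : set X} (h : A `<=` B) (p : set_type A) : set_type B :=
  SigSub (mem_set (h _ (set_mem (valP p)))).

Lemma incl_oe (A B : set X) (h : A `<=` B) : open A -> open_embedding (sincl h).
Proof.
move=> oA; split.
- move=> p q e; apply: val_inj; exact: (congr1 val e).
- apply: continuous_comp_initial; exact: val_cont.
- move=> U /sub_open [W [oW ->]].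
  exists (W `&` A); first exact: openI.
  apply/seteqP; split => q.
    by move=> [Wq Aq]; exists (SigSub (mem_set Aq)) => //; apply: val_inj.
  move=> [p Wp <-]; split => //; exact: set_mem (valP p).
Qed.

End Sub.


Section Cov.
Variables (X : topologicalType) (K : choiceType) (D : set K) (F : K -> set X).
Hypothesis Fo : forall i, D i -> open (F i).
Hypothesis Fcov : [set: X] `<=` cover D F.

Definition S (G : {fset K}) : set X := \bigcup_(k in [set k | k \in G /\ D k]) F k.
Lemma So G : open (S G). Proof. by apply: bigcup_open => k [_ Dk]; exact: Fo. Qed.
Lemma Ssub G1 G2 : (G1 `<=` G2)%fset -> S G1 `<=` S G2.
Proof.
move=> h x [k [kG Dk] Fx]; exists k => //; split => //.
exact: (fsubsetP h).
Qed.
Definition le (G1 G2 : {fset K}) : Prop := (G1 `<=` G2)%fset.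
Definition Z (G : {fset K}) : topologicalType := set_type (S G).
Definition z (G1 G2 : {fset K}) (h : le G1 G2) : Z G1 -> Z G2 := @sincl X _ _ (Ssub _ _ h).
Definition c (G : {fset K}) : Z G -> X := set_val.

Lemma dp : directed_poset le.
Proof.
split.
- exact: fsubset_refl.
- move=> a b d; exact: fsubset_trans.
- by move=> a b h1 h2; apply/eqP; rewrite eqEfsubset h1 h2.
- move=> A /finite_fsetP [B ->].
  exists (\bigcup_(a <- B) a)%fset => a aB.
  exact: (@bigfcup_sup _ _ B a xpredT id aB).
Qed.


Variable P : topologicalType -> Prop.
Hypothesis Hpull : forall (A B : topologicalType) (f : A -> B),
     injective f -> continuous f -> P B -> P A.
Hypothesis PX : P X.

Lemma diag : oe_diagram P z.
Proof.
split.
- exact: dp.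
- move=> G; apply: (Hpull _ _ set_val); [exact: val_inj | exact: val_cont | exact: PX].
- move=> i j h; apply: incl_oe; exact: So.
- by move=> i h p; apply: val_inj.
- by move=> i j k hij hjk hik p; apply: val_inj.
Qed.

Definition kx (x : X) : K := projT1 (cid2 (Fcov x Logic.I)).
Lemma kxP x : D (kx x) /\ F (kx x) x.
Proof. by rewrite /kx; case: (cid2 _). Qed.
Definition Gx (x : X) : {fset K} := [fset kx x]%fset.
Lemma Sx x : S (Gx x) x.
Proof. by exists (kx x); [split; [exact: fset11 | exact: (kxP x).1] | exact: (kxP x).2]. Qed.
Definition px (x : X) : Z (Gx x) := SigSub (mem_set (Sx x)).

Lemma colim : is_colimit P z c.
Proof.
split => //.
  split; first by move=> G; exact: val_cont.
  by move=> i j h; apply: funext.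
move=> W PW d [dc dcomp].
pose u (x : X) := d (Gx x) (px x).
have uE G q : u (set_val q) = d G q.
  set x := set_val q.
  have h1 : le (Gx x) (G `|` Gx x)%fset by exact: fsubsetUr.
  have h2 : le G (G `|` Gx x)%fset by exact: fsubsetUl.
  rewrite /u -(dcomp _ _ h1) -(dcomp _ _ h2) /=; congr (d _ _).
  by apply: val_inj.
have uc : continuous u.
  apply/continuousP => A oA.
  have -> : u @^-1` A = \bigcup_(k in D) (c [fset k]%fset @` (d [fset k]%fset @^-1` A)).
    apply/seteqP; split => x.
      move=> Ax; exists (kx x); first exact: (kxP x).1.
      by exists (px x).
    by move=> [k Dk [q Aq <-]]; rewrite /= /c uE.
  apply: bigcup_open => k Dk; apply: val_open; first exact: So.
  by move/continuousP: (dc [fset k]%fset); apply.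
exists u; split.
  by split => // G; apply: funext => q /=; rewrite uE.
move=> u' u'c u'E; apply: funext => x.
have := congr1 (fun f => f (px x)) (u'E (Gx x)); rewrite /= => ->.
by [].
Qed.

End Cov.

Lemma fg_compact (P : topologicalType -> Prop)
  (Hpull : forall (A B : topologicalType) (f : A -> B),
     injective f -> continuous f -> P B -> P A)
  (X : topologicalType) : P X -> fin_gen_oe P X -> compact [set: X].
Proof.
move=> PX fg; apply/compact_coverT => K D F Fo Fcov.
have idc : continuous (@id X) by move=> x.
have [[G [g [_ e]]] _] := fg _ _ _ _ _ _ (diag _ _ _ _ Fo _ Hpull PX) (colim _ _ _ _ Fo Fcov _ PX) id idc.
exists [fset k in G | `[< D k >]]%fset.
  move=> k; rewrite !inE => /andP [_ /asboolP].
  exact: mem_set.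
move=> x _.
have : S X K D F G x by rewrite (congr1 (fun f => f x) e); exact: set_mem (valP (g x)).
move=> [k [kG Dk] Fkx]; exists k => //=.
by rewrite !inE kG /=; apply/asboolP.
Qed.

Theorem corollary3p3 :
  (forall X : topologicalType, Haus X -> (fin_gen_oe Haus X <-> compact [set: X])) /\
  (forall X : topologicalType, Top1 X -> (fin_gen_oe Top1 X <-> compact [set: X])) /\
  (forall X : topologicalType, Top0 X -> (fin_gen_oe Top0 X <-> compact [set: X])).
Proof.
split; [|split]; move=> X PX; split.
- by apply: fg_compact => //; exact: pull_Haus.
- by apply: compact_fg; exact: push_Haus.
- by apply: fg_compact => //; exact: pull_Top1.
- by apply: compact_fg; exact: push_Top1.
- by apply: fg_compact => //; exact: pull_Top0.
- by apply: compact_fg; exact: push_Top0.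
Qed.
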